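(* Let $\underline c<\overline c$ and $\underline s<\overline s$ be real numbers and write $\phi(c,s)=\sqrt{c^2+s^2}$. Suppose $$\phi(\overline c,\overline s)+\phi(\underline c,\underline s)-\phi(\overline c,\underline s)-\phi(\underline c,\overline s)<0.$$ Define $\eta^3=\frac{\phi(\overline c,\underline s)-\phi(\underline c,\underline s)}{\overline c-\underline c}$, $\delta^3=\frac{\phi(\underline c,\overline s)-\phi(\underline c,\underline s)}{\overline s-\underline s}$, $\nu^3=\phi(\underline c,\underline s)-\eta^3\underline c-\delta^3\underline s$, and $\eta^4=\frac{\phi(\overline c,\overline s)-\phi(\underline c,\overline s)}{\overline c-\underline c}$, $\delta^4=\frac{\phi(\overline c,\overline s)-\phi(\overline c,\underline s)}{\overline s-\underline s}$, $\nu^4=\phi(\overline c,\overline s)-\eta^4\overline c-\delta^4\overline s$. Then for $n=3,4$ and all $(c,s)\in[\underline c,\overline c]\times[\underline s,\overline s]$ we have $\nu^n+\eta^n c+\delta^n s\ge \sqrt{c^2+s^2}$. *)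

(* Defs.v *)
From Stdlib Require Import Reals.
Open Scope R_scope.

Definition phi (c s : R) : R := sqrt (c ^ 2 + s ^ 2).

(* Main.v *)
Require Import Defs.
From Stdlib Require Import Reals Lra Psatz.
Open Scope R_scope.

Lemma sqrt_le_aux (X Y : R) : 0 <= Y -> X <= Y ^ 2 -> sqrt X <= Y.
Proof.
  intros hY hX. rewrite <- (sqrt_pow2 Y hY). apply sqrt_le_1_alt. exact hX.
Qed.

Lemma cs_aux (x1 y1 x2 y2 : R) :
  x1 * x2 + y1 * y2 <= sqrt (x1 ^ 2 + y1 ^ 2) * sqrt (x2 ^ 2 + y2 ^ 2).
Proof.
  assert (h1 : 0 <= x1 ^ 2 + y1 ^ 2) by nra.
  assert (h2 : 0 <= x2 ^ 2 + y2 ^ 2) by nra.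
  pose proof (pow2_sqrt _ h1) as e1. pose proof (pow2_sqrt _ h2) as e2.
  pose proof (sqrt_pos (x1 ^ 2 + y1 ^ 2)) as p1.
  pose proof (sqrt_pos (x2 ^ 2 + y2 ^ 2)) as p2.
  set (p := sqrt (x1 ^ 2 + y1 ^ 2)) in *.
  set (q := sqrt (x2 ^ 2 + y2 ^ 2)) in *.
  assert (0 <= p * q) by nra.
  assert ((x1 * x2 + y1 * y2) ^ 2 <= (p * q) ^ 2).
  { replace ((p*q)^2) with (p^2 * q^2) by ring. rewrite e1, e2.
    pose proof (pow2_ge_0 (x1 * y2 - x2 * y1)). nra. }
  nra.
Qed.

Lemma conv_aux (t x1 y1 x2 y2 : R) : 0 <= t <= 1 ->
  phi ((1 - t) * x1 + t * x2) ((1 - t) * y1 + t * y2)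
  <= (1 - t) * phi x1 y1 + t * phi x2 y2.
Proof.
  intros ht. unfold phi.
  assert (h1 : 0 <= x1 ^ 2 + y1 ^ 2) by nra.
  assert (h2 : 0 <= x2 ^ 2 + y2 ^ 2) by nra.
  pose proof (pow2_sqrt _ h1) as e1. pose proof (pow2_sqrt _ h2) as e2.
  pose proof (sqrt_pos (x1 ^ 2 + y1 ^ 2)) as p1.
  pose proof (sqrt_pos (x2 ^ 2 + y2 ^ 2)) as p2.
  pose proof (cs_aux x1 y1 x2 y2) as k.
  set (p := sqrt (x1 ^ 2 + y1 ^ 2)) in *.
  set (q := sqrt (x2 ^ 2 + y2 ^ 2)) in *.
  apply sqrt_le_aux; [nra|].
  assert (0 <= t * (1 - t)) by nra.
  assert (0 <= t * (1 - t) * (p * q - (x1 * x2 + y1 * y2))) by nra.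
  nra.
Qed.

Lemma bilin (cl cu sl su c s : R) (hc : cl < cu) (hs : sl < su)
  (h1 : cl <= c <= cu) (h2 : sl <= s <= su) :
  let a := (c - cl) / (cu - cl) in let b := (s - sl) / (su - sl) in
  0 <= a <= 1 /\ 0 <= b <= 1 /\
  sqrt (c ^ 2 + s ^ 2) <= (1 - a) * ((1 - b) * phi cl sl + b * phi cl su)
                        + a * ((1 - b) * phi cu sl + b * phi cu su).
Proof.
  intros a b.
  assert (ha : 0 <= a <= 1).
  { unfold a; split.
    - apply Rmult_le_pos; [lra|]. apply Rlt_le, Rinv_0_lt_compat; lra.
    - apply (Rmult_le_reg_r (cu - cl)); [lra|]. unfold Rdiv.
      rewrite Rmult_assoc, Rinv_l; lra. }
  assert (hb : 0 <= b <= 1).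
  { unfold b; split.
    - apply Rmult_le_pos; [lra|]. apply Rlt_le, Rinv_0_lt_compat; lra.
    - apply (Rmult_le_reg_r (su - sl)); [lra|]. unfold Rdiv.
      rewrite Rmult_assoc, Rinv_l; lra. }
  split; [exact ha|split; [exact hb|]].
  assert (ec : c = (1 - a) * cl + a * cu) by (unfold a; field; lra).
  assert (es : s = (1 - b) * sl + b * su) by (unfold b; field; lra).
  change (sqrt (c ^ 2 + s ^ 2)) with (phi c s).
  pose proof (conv_aux a cl s cu s ha) as k1.
  replace ((1 - a) * s + a * s) with s in k1 by ring. rewrite <- ec in k1.
  pose proof (conv_aux b cl sl cl su hb) as k2.
  replace ((1 - b) * cl + b * cl) with cl in k2 by ring. rewrite <- es in k2.
  pose proof (conv_aux b cu sl cu su hb) as k3.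
  replace ((1 - b) * cu + b * cu) with cu in k3 by ring. rewrite <- es in k3.
  assert (0 <= 1 - a) by lra.
  nra.
Qed.

Theorem proposition4 (cl cu sl su : R) (hc : cl < cu) (hs : sl < su)
  (hneg : phi cu su + phi cl sl - phi cu sl - phi cl su < 0) :
  let eta3 := (phi cu sl - phi cl sl) / (cu - cl) in
  let delta3 := (phi cl su - phi cl sl) / (su - sl) in
  let nu3 := phi cl sl - eta3 * cl - delta3 * sl in
  let eta4 := (phi cu su - phi cl su) / (cu - cl) in
  let delta4 := (phi cu su - phi cu sl) / (su - sl) in
  let nu4 := phi cu su - eta4 * cu - delta4 * su in
  (forall c s : R, cl <= c <= cu -> sl <= s <= su ->
     nu3 + eta3 * c + delta3 * s >= sqrt (c ^ 2 + s ^ 2)) /\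
  (forall c s : R, cl <= c <= cu -> sl <= s <= su ->
     nu4 + eta4 * c + delta4 * s >= sqrt (c ^ 2 + s ^ 2)).
Proof.
  intros eta3 delta3 nu3 eta4 delta4 nu4.
  split; intros c s h1 h2;
  destruct (bilin cl cu sl su c s hc hs h1 h2) as [ha [hb k]];
  set (a := (c - cl) / (cu - cl)) in *; set (b := (s - sl) / (su - sl)) in *.
  - assert (e : nu3 + eta3 * c + delta3 * s
              = phi cl sl + a * (phi cu sl - phi cl sl) + b * (phi cl su - phi cl sl))
      by (unfold nu3, eta3, delta3, a, b; field; lra).
    rewrite e. assert (0 <= a * b) by nra. nra.
  - assert (e : nu4 + eta4 * c + delta4 * s
              = phi cu su - (1 - a) * (phi cu su - phi cl su) - (1 - b) * (phi cu su - phi cu sl))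
      by (unfold nu4, eta4, delta4, a, b; field; lra).
    rewrite e. assert (0 <= (1 - a) * (1 - b)) by nra. nra.
Qed.
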